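(* Let $F\subseteq\mathcal{U}$ be the set of elements revealed in the first stage, and suppose the Simple algorithm with input a set $J\subset\mathbb{Z}$ is run on the elements of $\mathcal{U}\setminus F$ as they are revealed. Then it returns an independent set $P\subseteq\mathcal{U}\setminus F$ such that $$\mathrm{OPT}(P)\ \ge\ \sum_{j\in J}2^j\cdot\Big(\mathrm{rank}\big(B_{\mathcal{U}\setminus F}(J\setminus\{j\})\cup B_{\mathcal{U}\setminus F}(j)\big)-\mathrm{rank}\big(B_{\mathcal{U}\setminus F}(J\setminus\{j\})\big)\Big).$$
   Context: $M=(\mathcal{U},\mathcal{I})$ is a matroid with $n=|\mathcal{U}|$; $\mathrm{rank}(X)=\max\{|X'|:X'\subseteq X,X'\in\mathcal{I}\}$, $\mathrm{span}(X)=\{e:\mathrm{rank}(X\cup\{e\})=\mathrm{rank}(X)\}$, and $\mathrm{OPT}(X)=\max\{\sum_{e\in X'}\mathrm{val}(e):X'\subseteq X,X'\in\mathcal{I}\}$. Standing assumption: elements of rank $0$ have value $0$, and every element of positive value has value $2^i$ for some $i\in\mathbb{Z}$. For $X\subseteq\mathcal{U}$, $B_X(i)=\{e\in X:\mathrm{val}(e)=2^i\}$, $B_X(I)=\bigcup_{i\in I}B_X(i)$. Logarithms base 2. Setting: the elements of $\mathcal{U}$ are revealed one by one in uniformly random order; $W$ is the number of successes in $n$ independent fair Bernoulli trials, and $F$ is the set of the first $W$ revealed elements (none of which is selected); afterwards the elements of $\mathcal{U}\setminus F$ are revealed one by one. Simple algorithm with input $J$: start with $P=\emptyset$; immediately after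 each element $e\in\mathcal{U}\setminus F$ is revealed, if $\mathrm{val}(e)>0$, $\log\mathrm{val}(e)\in J$ and $e\notin\mathrm{span}(P)$, add $e$ to $P$. Output $P$. *)

(* Defs.v *)
From mathcomp Require Import all_boot all_order all_algebra.
From mathcomp Require Import boolp.
Set Implicit Arguments. Unset Strict Implicit. Unset Printing Implicit Defensive.
Import Order.TTheory GRing.Theory Num.Theory.
Local Open Scope ring_scope.

Section Matroid.
Variable T : finType.

Definition is_matroid (I : pred {set T}) : Prop :=
  [/\ I set0,
      (forall A B : {set T}, B \subset A -> I A -> I B) &
      (forall A B : {set T}, I A -> I B -> #|A| < #|B| ->
          exists2 e, e \in B :\: A & I (e |: A))]%N.

Variable I : pred {set T}.

Definition mrank (X : {set T}) : nat :=
  \max_(Y : {set T} | (Y \subset X) && I Y) #|Y|.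

Definition mspan (X : {set T}) : {set T} :=
  [set e | mrank (e |: X) == mrank X].

Variable R : realFieldType.
Variable val : T -> R.

Definition OPT (X : {set T}) : R :=
  \big[Num.max/0]_(Y : {set T} | (Y \subset X) && I Y) \sum_(e in Y) val e.

Definition Bcl (X : {set T}) (i : int) : {set T} :=
  [set e in X | val e == (2 : R) ^ i].

Definition BclJ (X : {set T}) (J : pred int) : {set T} :=
  [set e in X | `[< exists2 i, J i & val e = (2 : R) ^ i >]].

Definition inJ (J : pred int) (e : T) : bool :=
  (0 < val e) && `[< exists2 i, J i & val e = (2 : R) ^ i >].

Definition simple_step (J : pred int) (P : {set T}) (e : T) : {set T} :=
  if inJ J e && (e \notin mspan P) then e |: P else P.

(* The Simple algorithm with input J run on the revealed sequence s
   (the elements of U \ F in order of revelation), starting from P = empty. *)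
Definition simple_alg (J : pred int) (s : seq T) : {set T} :=
  foldl (simple_step J) set0 s.

End Matroid.

(* Main.v *)
Require Import Defs.
From mathcomp Require Import all_boot all_order all_algebra.
From mathcomp Require Import boolp.
Set Implicit Arguments. Unset Strict Implicit. Unset Printing Implicit Defensive.
Import Order.TTheory GRing.Theory Num.Theory.
Local Open Scope ring_scope.

Section L.
Variable T : finType.
Variable I : pred {set T}.
Hypothesis HM : is_matroid I.

Lemma mrank_ge (X Y : {set T}) : Y \subset X -> I Y -> (#|Y| <= mrank I X)%N.
Proof. by move=> sYX iY; rewrite /mrank (bigD1 Y) /= ?sYX ?iY // leq_maxl. Qed.

Lemma mrank_le (X : {set T}) (n : nat) :
  (forall Y : {set T}, Y \subset X -> I Y -> (#|Y| <= n)%N) -> (mrank I X <= n)%N.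
Proof. move=> H; apply/bigmax_leqP => Y /andP[]; exact: H. Qed.

Lemma mrank_indep (P : {set T}) : I P -> mrank I P = #|P|.
Proof.
move=> iP; apply/eqP; rewrite eqn_leq mrank_ge // andbT.
by apply: mrank_le => Y /subset_leq_card.
Qed.

Lemma hered (A B : {set T}) : B \subset A -> I A -> I B.
Proof. by case: HM => _ H _; exact: H. Qed.

Lemma span_in (P : {set T}) (e : T) : I P -> e \in mspan I P -> (e \in P) || ~~ I (e |: P).
Proof.
move=> iP; rewrite inE => /eqP H.
case eP: (e \in P) => //=; apply/negP => ie.
have := mrank_ge (subxx (e |: P)) ie.
by rewrite H mrank_indep // cardsU1 eP ltnn.
Qed.

Lemma span_out (P : {set T}) (e : T) : I P -> (e \in P) || ~~ I (e |: P) -> e \in mspan I P.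
Proof.
move=> iP H; rewrite inE [mrank I P]mrank_indep //; apply/eqP.
case eP: (e \in P) in H *.
  by rewrite (setUidPr _) ?sub1set // mrank_indep.
apply/eqP; rewrite eqn_leq; apply/andP; split.
  apply: mrank_le => Y sY iY.
  have: Y != e |: P by apply: contraNneq H => <-.
  move=> neY; have pY : Y \proper e |: P by rewrite properEneq neY sY.
  by have := proper_card pY; rewrite cardsU1 eP.
by apply: mrank_ge => //; apply: subsetUr.
Qed.

Variable R : realFieldType.
Variable val : T -> R.
Variable J : pred int.

Definition Inv (P D : {set T}) := [/\ I P, P \subset [set x in D | inJ val J x] &
  forall e, e \in D -> inJ val J e -> (e \in P) || ~~ I (e |: P)].

Lemma step_inv (P D : {set T}) x : Inv P D -> Inv (simple_step I val J P x) (x |: D).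
Proof.
case=> iP sP hP; rewrite /simple_step.
case: ifP => [/andP[jx nx] | hx].
  have ixP : I (x |: P).
    apply: contraNT nx => nI; apply: span_out => //; by rewrite nI orbT.
  split => //.
    apply/subsetP => y; rewrite !inE => /predU1P[-> | yP]; first by rewrite eqxx jx.
    by move/subsetP: sP => /(_ y yP); rewrite !inE => /andP[-> ->]; rewrite orbT.
  move=> e; rewrite !inE => /predU1P[-> _ | eD je]; first by rewrite eqxx.
  case/orP: (hP e eD je) => [-> | nI]; first by rewrite orbT.
  case: ((e == x) || (e \in P)) => //=; apply/negP => ieP.
  apply: (negP nI); case: HM => _ Hh _; apply: (Hh _ _ _ ieP); apply/subsetP => y; rewrite !inE.
  by case/orP => [-> // | ->]; rewrite !orbT.
split => //.
  apply: (subset_trans sP); apply/subsetP => y; rewrite !inE => /andP[-> ->].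
  by rewrite orbT.
move=> e; rewrite !inE => /predU1P[-> je | eD je]; last exact: hP.
apply: span_in => //; move: hx; rewrite je /=; by case: (x \in mspan I P).
Qed.

Lemma fold_inv (s : seq T) (P D : {set T}) :
  Inv P D -> Inv (foldl (simple_step I val J) P s) (D :|: [set x in s]).
Proof.
elim: s P D => [|x s IH] P D hI /=.
  suff -> : D :|: [set x in [::]] = D by [].
  by apply/setP => y; rewrite !inE orbF.
have := IH _ _ (step_inv x hI).
suff -> : x |: D :|: [set x0 in s] = D :|: [set x0 in x :: s] by [].
by apply/setP => y; rewrite !inE; case: (y == x); case: (y \in D); case: (y \in s).
Qed.

Definition Vj (j : int) : {set T} := [set e | val e == (2:R) ^ j].

Lemma rank_bound (D P : {set T}) (j : int) : Inv P D -> J j ->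
  (mrank I (BclJ val D (predD1 J j) :|: Bcl val D j)
   <= #|P :&: Vj j| + mrank I (BclJ val D (predD1 J j)))%N.
Proof.
case=> iP sP hP Jj.
apply: (@leq_trans #|P|).
  apply: mrank_le => Z sZ iZ; rewrite leqNgt; apply/negP => lt.
  case: HM => _ _ Hex; case: (Hex P Z iP iZ lt) => e; rewrite inE => /andP[eP eZ] ieP.
  have [eD je] : e \in D /\ inJ val J e.
    move/subsetP: sZ => /(_ e eZ); rewrite !inE => /orP[/andP[-> /asboolP[i /andP[_ Ji] ei]] | /andP[-> /eqP ej]]; split => //; rewrite /inJ.
      by rewrite ei exprz_gt0 //=; apply/asboolP; exists i.
    by rewrite ej exprz_gt0 //=; apply/asboolP; exists j.
  by move: (hP e eD je); rewrite (negbTE eP) ieP.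
rewrite -(cardsID (Vj j) P) leq_add2l.
apply: mrank_ge; last by apply: (hered _ iP); apply: subsetDl.
apply/subsetP => y; rewrite !inE => /andP[nj yP].
move/subsetP: sP => /(_ y yP); rewrite !inE => /andP[-> /andP[_ /asboolP[i Ji yi]]] /=.
apply/asboolP; exists i => //=; rewrite Ji andbT; apply: contraNneq nj => eij.
by rewrite yi eij.
Qed.

Lemma two_inj (i j : int) : (2:R) ^ i = (2:R) ^ j -> i = j.
Proof. by apply: ieexprIz; rewrite ?ltr0n // pnatr_eq1. Qed.

Lemma sum_bound (P : {set T}) (Js : seq int) : uniq Js ->
  (forall e, e \in P -> 0 < val e) ->
  \sum_(j <- Js) (2:R) ^ j * #|P :&: Vj j|%:R <= \sum_(e in P) val e.
Proof.
move=> uJ pos.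
have E : forall j, (2:R) ^ j * #|P :&: Vj j|%:R =
    \sum_(e in P) (if val e == (2:R) ^ j then val e else 0).
  move=> j; rewrite mulr_natr -sumr_const.
  rewrite (eq_bigr val); last by move=> e; rewrite !inE => /andP[_ /eqP].
  rewrite big_mkcond [RHS]big_mkcond /=; apply: eq_bigr => e _.
  by rewrite !inE; case: (e \in P); case: (val e == _).
rewrite (eq_bigr _ (fun j _ => E j)) exchange_big /=.
apply: ler_sum => e eP.
case: (boolP (has (fun j => val e == (2:R) ^ j) Js)) => [/hasP[j0 j0J /eqP e0] | nh].
  rewrite (bigD1_seq j0) //= e0 eqxx big1 ?addr0 // => j nj.
  case: eqP => // ej; case/negP: nj; apply/eqP; apply: two_inj; by rewrite -ej.
rewrite big1_seq; first exact/ltW/pos.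
move=> j /andP[_ jJ]; case: eqP => // ej; case/hasP: nh; exists j => //; exact/eqP.
Qed.

Lemma opt_ge (P : {set T}) : I P -> \sum_(e in P) val e <= OPT I val P.
Proof.
move=> iP; rewrite /OPT.
have : P \in index_enum {set T} by rewrite mem_index_enum.
have : (P \subset P) && I P by rewrite subxx iP.
elim: (index_enum _) => [|Y r IH] // PP; rewrite in_cons big_cons.
case/predU1P => [<- | Pr]; first by rewrite PP le_max lexx.
case: ifP => _; last exact: IH.
by rewrite le_max IH ?orbT.
Qed.
End L.

Theorem theorem1 (T : finType) (I : pred {set T}) (R : realFieldType)
  (val : T -> R)
  (HM : is_matroid I)
  (Hrank0 : forall e : T, mrank I [set e] = 0%N -> val e = 0)
  (Hpow : forall e : T, 0 < val e -> exists i : int, val e = (2 : R) ^ i)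
  (F : {set T}) (s : seq T) (Hs : perm_eq s (enum (~: F)))
  (J : pred int) :
  let P := simple_alg I val J s in
  [/\ I P, P \subset ~: F &
      forall Js : seq int, uniq Js -> all J Js ->
        \sum_(j <- Js)
           (2 : R) ^ j *
           ((mrank I (BclJ val (~: F) (predD1 J j) :|: Bcl val (~: F) j))%:R
            - (mrank I (BclJ val (~: F) (predD1 J j)))%:R)
        <= OPT I val P].
Proof.
move=> P.
have I0 : Inv I val J set0 set0.
  split; [by case: HM | by rewrite sub0set | by move=> e; rewrite inE].
have := fold_inv HM s I0.
have -> : set0 :|: [set x in s] = ~: F.
  by apply/setP => y; rewrite !inE (perm_mem Hs) mem_enum inE.
rewrite -/(simple_alg I val J s) -/P => hI.
case: (hI) => iP sP hP.
have sPF : P \subset ~: F.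
  by apply: (subset_trans sP); apply/subsetP => y; rewrite inE => /andP[].
split => // Js uJ aJ.
apply: (le_trans _ (opt_ge val iP)).
apply: (le_trans _ (@sum_bound _ _ val P Js uJ _)); last first.
  move=> e eP; move/subsetP: sP => /(_ e eP); rewrite inE => /andP[_ /andP[]] //.
rewrite [X in _ <= X]big_seq big_seq; apply: ler_sum => j jJ.
have Jj : J j by exact: (allP aJ j jJ).
apply: ler_wpM2l; first exact/ltW/exprz_gt0.
rewrite lerBlDr -natrD ler_nat addnC.
by rewrite addnC; exact: (rank_bound HM hI Jj).
Qed.
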